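(* Let $\mathcal{S}=\{s_1,\dots,s_N\}$ be a finite state space, $\mathcal{A}$ a finite action space, $\gamma\in(0,1)$, and consider the real MDP $\langle\mathcal{S},\mathcal{A},\mathbb{P},R,\gamma\rangle$ and the DT MDP $\langle\mathcal{S},\mathcal{A},\mathbb{P}',R',\gamma\rangle$. Then for all $i,j$, $$|V^*_{\mathrm{real}}(s_i)-V^*_{\mathrm{DT}}(s_j)|\le\bar d(s_i,s_j).$$
   Context: $\mathbb{P}(\cdot|s,a),\mathbb{P}'(\cdot|s,a)$ are probability distributions on $\mathcal{S}$; $R,R':\mathcal{S}\times\mathcal{A}\to\mathbb{R}$. $V^*_{\mathrm{real}}$ is the unique solution of $V(s)=\max_a\{R(s,a)+\gamma\sum_{\tilde s}\mathbb{P}(\tilde s|s,a)V(\tilde s)\}$, and $V^*_{\mathrm{DT}}$ the analogue with $\mathbb{P}',R'$. For distributions $P,Q$ on $\mathcal{S}$ and a cost $d:\mathcal{S}\times\mathcal{S}\to[0,\infty)$ (not required to vanish on the diagonal; first argument a real-MDP state, second a DT-MDP state), $W_1(P,Q;d)=\min_\Lambda\sum_{i,j}\lambda_{i,j}d(s_i,s_j)$ over nonnegative $N\times N$ matrices with row sums $P(s_i)$ and column sums $Q(s_j)$. Define $d_0\equiv0$ and $d_n(s_i,s_j)=\max_a\{|R(s_i,a)-R'(s_j,a)|+\gamma W_1(\mathbb{P}(\cdot|s_i,a),\mathbb{P}'(\cdot|s_j,a);d_{n-1})\}$; the DT bisimulation metric $\bar d$ is the pointwise limit of the nondecreasing sequence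 $(d_n)$. *)

(* Defs.v *)
From HB Require Import structures.
From mathcomp Require Import all_boot all_order all_algebra.
From mathcomp Require Import all_classical all_reals all_analysis.
Set Implicit Arguments. Unset Strict Implicit. Unset Printing Implicit Defensive.
Import Order.TTheory GRing.Theory Num.Theory numFieldNormedType.Exports.
Local Open Scope classical_set_scope.
Local Open Scope ring_scope.

Section DTBisim.
Variables (R : realType) (S A : finType).

(* maximum of F over the finite (nonempty) action set A;
   the value 0 for empty A is a junk default, never used (A is assumed nonempty). *)
Definition maxA (F : A -> R) : R :=
  match [pick a : A] with
  | Some a0 => \big[Num.max/F a0]_(a : A) F a
  | None => 0
  end.

Definition is_distr (P : S -> R) : Prop :=
  (forall s, 0 <= P s) /\ \sum_(s : S) P s = 1.

Definition coupling (P Q : S -> R) (Lam : S -> S -> R) : Prop :=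
  (forall i j, 0 <= Lam i j) /\
  (forall i, \sum_(j : S) Lam i j = P i) /\
  (forall j, \sum_(i : S) Lam i j = Q j).

Definition W1 (P Q : S -> R) (d : S -> S -> R) : R :=
  inf [set c | exists Lam, coupling P Q Lam /\
                 c = \sum_(i : S) \sum_(j : S) Lam i j * d i j].

Fixpoint dn (P P' : S -> A -> S -> R) (Rw Rw' : S -> A -> R) (gamma : R) (n : nat)
  : S -> S -> R :=
  match n with
  | 0 => fun _ _ => 0
  | n'.+1 => fun s t =>
      maxA (fun a => `|Rw s a - Rw' t a|
                     + gamma * W1 (P s a) (P' t a) (dn P P' Rw Rw' gamma n'))
  end.

(* DT bisimulation metric: pointwise limit of the nondecreasing sequence d_n *)
Definition dbar (P P' : S -> A -> S -> R) (Rw Rw' : S -> A -> R) (gamma : R)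
  (s t : S) : R :=
  limn (fun n => dn P P' Rw Rw' gamma n s t).

Definition bellman_opt (P : S -> A -> S -> R) (Rw : S -> A -> R) (gamma : R)
  (V : S -> R) : Prop :=
  forall s, V s = maxA (fun a => Rw s a + gamma * \sum_(t : S) P s a t * V t).

End DTBisim.

(* Main.v *)
From Pilot Require Import Defs.
From HB Require Import structures.
From mathcomp Require Import all_boot all_order all_algebra.
From mathcomp Require Import all_classical all_reals all_analysis.
From mathcomp Require Import ring lra.
Import Order.TTheory GRing.Theory Num.Theory.
Local Notation maxA := Pilot.Defs.maxA.
Import numFieldNormedType.Exports.
Local Open Scope ring_scope.

Section Aux.
Variables (R : realType) (S A : finType).

Lemma maxA_ge (F : A -> R) a : F a <= maxA F.
Proof.
rewrite /maxA; case: pickP => [b _|/(_ a)//].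
by rewrite (bigD1 a) //= le_max lexx.
Qed.

Lemma maxA_le (a0 : A) (F : A -> R) c : (forall a, F a <= c) -> maxA F <= c.
Proof.
move=> H; rewrite /maxA; case: pickP => [b _|/(_ a0)//].
apply: (big_ind (fun x => x <= c)) => //.
by move=> x y hx hy; rewrite ge_max hx hy.
Qed.

Lemma maxA_sub (a0 : A) (f g h : A -> R) :
  (forall a, f a <= g a + h a) -> maxA f <= maxA g + maxA h.
Proof.
move=> H; apply: (maxA_le a0) => a.
apply: (le_trans (H a)); apply: lerD; exact: maxA_ge.
Qed.

Lemma maxA_diff (a0 : A) (f g : A -> R) :
  `|maxA f - maxA g| <= maxA (fun a => `|f a - g a|).
Proof.
have h1 : maxA g <= maxA f + maxA (fun a => `|f a - g a|).
  apply: (maxA_sub a0) => a.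
  rewrite distrC; have := ler_norm (g a - f a); lra.
have h2 : maxA f <= maxA g + maxA (fun a => `|f a - g a|).
  apply: (maxA_sub a0) => a.
  have := ler_norm (f a - g a); lra.
rewrite ler_norml; apply/andP; split; lra.
Qed.

Lemma sum_ge_term (F : S -> R) i : (forall j, 0 <= F j) -> F i <= \sum_j F j.
Proof. by move=> H; rewrite (bigD1 i) //= lerDl sumr_ge0. Qed.

Lemma sum_ge_termA (F : A -> R) i : (forall j, 0 <= F j) -> F i <= \sum_j F j.
Proof. by move=> H; rewrite (bigD1 i) //= lerDl sumr_ge0. Qed.

Definition cost (Lam d : S -> S -> R) := \sum_(i : S) \sum_(j : S) Lam i j * d i j.

Lemma coupling_prod (p q : S -> R) :
  is_distr p -> is_distr q -> coupling p q (fun i j => p i * q j).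
Proof.
move=> [p0 p1] [q0 q1]; split; [|split].
- by move=> i j; apply: mulr_ge0.
- by move=> i; rewrite -mulr_sumr q1 mulr1.
- by move=> j; rewrite -mulr_suml p1 mul1r.
Qed.

Lemma coupling_mass (p q : S -> R) Lam :
  is_distr p -> coupling p q Lam -> \sum_i \sum_j Lam i j = 1.
Proof.
move=> [_ p1] [_ [hr _]]; rewrite -p1; apply: eq_bigr => i _; exact: hr.
Qed.

Lemma W1_le_cost (p q : S -> R) d Lam :
  (forall i j, 0 <= d i j) -> coupling p q Lam -> W1 p q d <= cost Lam d.
Proof.
move=> d0 hL.
have hlb : has_lbound [set c | exists Lam, coupling p q Lam /\
                 c = \sum_(i : S) \sum_(j : S) Lam i j * d i j].
  exists 0 => c [L [[L0 _] ->]].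
  by apply: sumr_ge0 => i _; apply: sumr_ge0 => j _; apply: mulr_ge0.
apply: (ge_inf hlb); by exists Lam.
Qed.

Lemma W1_ge (p q : S -> R) d c :
  is_distr p -> is_distr q ->
  (forall Lam, coupling p q Lam -> c <= cost Lam d) -> c <= W1 p q d.
Proof.
move=> hp hq H; apply: lb_le_inf.
  by exists (cost (fun i j => p i * q j) d); exists (fun i j => p i * q j);
     split => //; exact: coupling_prod.
by move=> y [L [hL ->]]; apply: H.
Qed.

Lemma cost_le (Lam d d' : S -> S -> R) :
  (forall i j, 0 <= Lam i j) -> (forall i j, d i j <= d' i j) ->
  cost Lam d <= cost Lam d'.
Proof.
move=> L0 H; apply: ler_sum => i _; apply: ler_sum => j _.
by apply: ler_wpM2l.
Qed.

Lemma cost_addc (p q : S -> R) Lam d e :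
  is_distr p -> coupling p q Lam ->
  cost Lam (fun i j => d i j + e) = cost Lam d + e.
Proof.
move=> hp hL; rewrite /cost.
have -> : \sum_i \sum_j Lam i j * (d i j + e) =
          \sum_i (\sum_j Lam i j * d i j + (\sum_j Lam i j) * e).
  apply: eq_bigr => i _; rewrite mulr_suml -big_split /=.
  by apply: eq_bigr => j _; rewrite mulrDr.
by rewrite big_split /= -mulr_suml (coupling_mass _ _ _ hp hL) mul1r.
Qed.

Lemma key_ineq (p q : S -> R) Lam (V V' : S -> R) :
  coupling p q Lam ->
  `|\sum_i p i * V i - \sum_j q j * V' j| <= cost Lam (fun i j => `|V i - V' j|).
Proof.
move=> [L0 [hr hc]].
have -> : \sum_i p i * V i - \sum_j q j * V' j =
          \sum_i \sum_j Lam i j * (V i - V' j).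
  have e1 : \sum_i p i * V i = \sum_i \sum_j Lam i j * V i.
    by apply: eq_bigr => i _; rewrite -hr mulr_suml.
  have e2 : \sum_j q j * V' j = \sum_i \sum_j Lam i j * V' j.
    rewrite exchange_big /=; apply: eq_bigr => j _; by rewrite -hc mulr_suml.
  rewrite e1 e2 -sumrB; apply: eq_bigr => i _; rewrite -sumrB.
  by apply: eq_bigr => j _; rewrite mulrBr.
apply: (le_trans (ler_norm_sum _ _ _)); apply: ler_sum => i _.
apply: (le_trans (ler_norm_sum _ _ _)); apply: ler_sum => j _.
by rewrite normrM ger0_norm.
Qed.

End Aux.
Arguments maxA_ge [R A] F a.
Arguments maxA_le [R A] a0 F c.
Arguments maxA_sub [R A] a0 f g h.
Arguments maxA_diff [R A] a0 f g.
Arguments sum_ge_term [R S] F i.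
Arguments sum_ge_termA [R A] F i.
Arguments coupling_prod [R S p q].
Arguments coupling_mass [R S p q Lam].
Arguments W1_le_cost [R S p q d Lam].
Arguments W1_ge [R S p q d c].
Arguments cost_le [R S Lam d d'].
Arguments cost_addc [R S p q Lam] d e.
Arguments key_ineq [R S p q Lam] V V'.

Theorem corollary1 (R : realType) (S A : finType) (a0 : A)
  (P P' : S -> A -> S -> R) (Rw Rw' : S -> A -> R) (gamma : R)
  (Vreal VDT : S -> R) :
  0 < gamma < 1 ->
  (forall s a, is_distr (P s a)) ->
  (forall s a, is_distr (P' s a)) ->
  bellman_opt P Rw gamma Vreal ->
  bellman_opt P' Rw' gamma VDT ->
  forall si sj : S, `|Vreal si - VDT sj| <= dbar P P' Rw Rw' gamma si sj.
Proof.
move=> /andP[g0 g1] hP hP' hV hV' si sj.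
have g0' : 0 <= gamma by exact: ltW.
set D := dn P P' Rw Rw' gamma.
have D0 : forall n s t, 0 <= D n s t.
  elim=> [|n IH] s t /=; first by [].
  apply: (le_trans _ (maxA_ge _ a0)); apply: addr_ge0 => //.
  apply: mulr_ge0 => //; apply: W1_ge => // L [L0 _].
  by apply: sumr_ge0 => i _; apply: sumr_ge0 => j _; apply: mulr_ge0.
have Dmono : forall n s t, D n s t <= D n.+1 s t.
  elim=> [|n IH] s t; first exact: D0.
  rewrite [D n.+1 s t]/= [D n.+2 s t]/=.
  apply: (maxA_le a0) => a; apply: (le_trans _ (maxA_ge _ a)).
  rewrite lerD2l; apply: ler_wpM2l => //.
  apply: W1_ge => // L hL; apply: le_trans (W1_le_cost _ hL) _ => //.
  by apply: cost_le => //; case: hL.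
set K := \sum_s \sum_t \sum_a `|Rw s a - Rw' t a|.
have K0 : 0 <= K by do 3! (apply: sumr_ge0 => ? _).
have HK : forall s t a, `|Rw s a - Rw' t a| <= K.
  move=> s t a.
  apply: (le_trans _ (sum_ge_term _ s _)); last by move=> ?; do 2! (apply: sumr_ge0 => ? _).
  apply: (le_trans _ (sum_ge_term _ t _)); last by move=> ?; do 1! (apply: sumr_ge0 => ? _).
  by apply: sum_ge_termA.
set B := K / (1 - gamma).
have hB : K + gamma * B = B.
  rewrite /B; field; apply/eqP => h; move: g1; rewrite -subr_gt0 h ltxx //.
have Dbound : forall n s t, D n s t <= B.
  have B0 : 0 <= B by apply: divr_ge0 => //; rewrite subr_ge0 ltW.
  elim=> [|n IH] s t; first exact: B0.
  rewrite /=; apply: (maxA_le a0) => a; rewrite -hB; apply: lerD => //.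
  apply: ler_wpM2l => //.
  have hL := coupling_prod (hP s a) (hP' t a).
  apply: le_trans (W1_le_cost _ hL) _ => //.
  apply: le_trans (cost_le (d' := fun i j => 0 + B) _ _) _.
  - by case: hL.
  - by move=> i j; rewrite add0r.
  by rewrite (cost_addc _ _ (hP s a) hL) /cost big1 ?add0r // => i _; rewrite big1 // => j _; rewrite mulr0.
set M := \sum_s \sum_t `|Vreal s - VDT t|.
have Main : forall n s t, `|Vreal s - VDT t| <= D n s t + gamma ^+ n * M.
  elim=> [|n IH] s t.
    rewrite expr0 mul1r /= add0r.
    apply: (le_trans _ (sum_ge_term _ s _)); last by move=> ?; apply: sumr_ge0.
    exact: sum_ge_term.
  rewrite (hV s) (hV' t).
  apply: le_trans (maxA_diff a0 _ _) _.
  apply: (maxA_le a0) => a.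
  pose F := fun b => `|Rw s b - Rw' t b| + gamma * W1 (P s b) (P' t b) (D n).
  have -> : D n.+1 s t = maxA F by [].
  apply: (@le_trans _ _ (F a + gamma ^+ n.+1 * M)); last by rewrite lerD2r maxA_ge.
  rewrite /F.
  have hW : `|\sum_i P s a i * Vreal i - \sum_j P' t a j * VDT j|
             <= W1 (P s a) (P' t a) (D n) + gamma ^+ n * M.
    rewrite -lerBlDr; apply: W1_ge => // L hL.
    rewrite lerBlDr -(cost_addc _ _ (hP s a) hL).
    apply: le_trans (key_ineq _ _ hL) _.
    by apply: cost_le => //; case: hL.
  set x := \sum_i _; set y := \sum_j _.
  have -> : Rw s a + gamma * x - (Rw' t a + gamma * y)
            = (Rw s a - Rw' t a) + gamma * (x - y) by ring.
  apply: le_trans (ler_normD _ _) _.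
  rewrite normrM (ger0_norm g0') exprS -mulrA -addrA lerD2l -mulrDr.
  by apply: ler_wpM2l.
have cvgD : cvgn (fun n => D n si sj).
  apply: nondecreasing_is_cvgn.
    by apply/nondecreasing_seqP => n; exact: Dmono.
  by exists B => _ [n _ <-]; exact: Dbound.
have hmono : {homo (fun n => D n si sj) : n m / (n <= m)%N >-> n <= m}.
  by apply/nondecreasing_seqP => k; exact: Dmono.
set db := dbar P P' Rw Rw' gamma si sj.
have Hle : forall n, `|Vreal si - VDT sj| - db <= gamma ^+ n * M.
  move=> n; have h1 := Main n si sj.
  have h2 : D n si sj <= db := nondecreasing_cvgn_le hmono cvgD n.
  move: h1 h2; set u := D n si sj; set v := gamma ^+ n * M; set x := `|Vreal si - VDT sj|; lra.
have hg : ((fun n => gamma ^+ n * M) @ \oo --> 0)%classic.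
  rewrite -(mul0r M); apply: cvgMr_tmp; apply: cvg_expr.
  by rewrite ger0_norm.
rewrite -subr_le0.
rewrite -(cvg_lim _ hg) //; apply: limr_ge; first exact: (cvgP _ hg).
by apply: nearW => n; exact: Hle.
Qed.
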